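(* Let $\Gamma$ be a finite, undirected, simplicial graph with $\#V\Gamma\ge3$ whose complement $\Gamma^c$ is connected. Let $\mathbf{w}\in W_\Gamma$ and let $\mathcal{S}\subseteq W_\Gamma$ be finite. Then there exist $\mathbf{v}\in W_\Gamma$ and a closed walk $(t_1,\dots,t_n)$ in $\Gamma^c$ covering the whole graph such that for all $L\in\mathbb{N}_{\ge1}$ and all $\mathbf{x}\in\mathcal{S}\setminus\{e\}$: $|\mathbf{w}\mathbf{v}(t_1\cdots t_n)^L|=|\mathbf{w}|+|\mathbf{v}|+|(t_1\cdots t_n)^L|$ and $\mathbf{w}\mathbf{v}(t_1\cdots t_n)^L\not\le\mathbf{x}\mathbf{w}\mathbf{v}(t_1\cdots t_n)^L$.
   Context: $\Gamma^c$ is the graph on $V\Gamma$ with an edge between distinct $v,v'$ iff $(v,v')\notin E\Gamma$. $W_\Gamma=\langle V\Gamma\mid v^2=e,\ vv'=v'v \text{ for }(v,v')\in E\Gamma\rangle$ is the right-angled Coxeter group, $|\cdot|$ the word length with respect to the generating set $V\Gamma$, and $\mathbf{u}\le\mathbf{w}$ means $|\mathbf{u}^{-1}\mathbf{w}|=|\mathbf{w}|-|\mathbf{u}|$ (right weak Bruhat order). A walk in a graph $G$ is a sequence of vertices $(v_1,\dots,v_n)$ with $v_i,v_{i+1}$ adjacent in $G$ for all $i<n$; it is closed if in addition $v_1,v_n$ are adjacent, and covers the whole graph if $\{v_1,\dots,v_n\}$ is the full vertex set. The product $t_1\cdots t_n$ is taken in $W_\Gamma$. *)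

(* Defs.v *)
From mathcomp Require Import all_boot.
From mathcomp Require Import boolp.
From Stdlib Require Import Relation_Operators.
Set Implicit Arguments. Unset Strict Implicit. Unset Printing Implicit Defensive.

(* A finite simplicial graph Gamma is given by a vertex finType T and a
   symmetric irreflexive edge relation e : rel T. *)

Definition gcompl (T : eqType) (e : rel T) : rel T :=
  fun x y => (x != y) && ~~ e x y.

(* Words over V Gamma represent elements of W_Gamma. One elementary move:
   swap two adjacent commuting letters (v v' -> v' v for (v,v') in E),
   or delete a square v v. *)
Definition rstep (T : eqType) (e : rel T) (u w : seq T) : Prop :=
  (exists a b x y, e x y /\ u = a ++ x :: y :: b /\ w = a ++ y :: x :: b)
  \/ (exists a b x, u = a ++ x :: x :: b /\ w = a ++ b).

(* Equality in W_Gamma = <V | v^2 = e, vv' = v'v for (v,v') in E>: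
   the equivalence relation generated by elementary moves. *)
Definition weq (T : eqType) (e : rel T) : seq T -> seq T -> Prop :=
  clos_refl_sym_trans (seq T) (@rstep T e).

Lemma wlen_ex (T : eqType) (e : rel T) (w : seq T) :
  exists n, `[< exists u : seq T, size u = n /\ weq e u w >].
Proof.
exists (size w); apply/asboolP; exists w; split => //; exact: rst_refl.
Qed.

Definition wlen (T : eqType) (e : rel T) (w : seq T) : nat :=
  ex_minn (wlen_ex e w).

(* Group operations on representatives: product = concatenation,
   inverse = reversal (generators are involutions), identity = [::]. *)
Definition winv (T : Type) (w : seq T) : seq T := rev w.
Definition wpow (T : Type) (w : seq T) (L : nat) : seq T := flatten (nseq L w).

(* Right weak Bruhat order: u <= w iff |u^{-1} w| = |w| - |u|
   (stated additively, avoiding truncated subtraction). *)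
Definition wle (T : eqType) (e : rel T) (u w : seq T) : Prop :=
  wlen e (winv u ++ w) + wlen e u = wlen e w.

(* Main.v *)
Require Import Defs.
From mathcomp Require Import all_boot.
From mathcomp Require Import zify.
From mathcomp Require Import boolp.
From Stdlib Require Import Relation_Operators.
Set Implicit Arguments. Unset Strict Implicit. Unset Printing Implicit Defensive.

Section RACG.
Variable T : finType.
Variable e : rel T.
Hypothesis e_sym : symmetric e.
Hypothesis e_irr : irreflexive e.

Lemma rstep_cat p q u w : rstep e u w -> rstep e (p ++ u ++ q) (p ++ w ++ q).
Proof.
case=> [[a [b [x [y [exy [-> ->]]]]]] | [a [b [x [-> ->]]]]].
  by left; exists (p ++ a), (b ++ q), x, y; rewrite -!catA.
by right; exists (p ++ a), (b ++ q), x; rewrite -!catA.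
Qed.

Lemma weq_cat p q u w : weq e u w -> weq e (p ++ u ++ q) (p ++ w ++ q).
Proof.
elim=> [u1 w1 H|u1|u1 w1 _ IH|u1 w1 z1 _ IH1 _ IH2].
- by apply: rst_step; apply: rstep_cat.
- exact: rst_refl.
- exact: rst_sym.
- exact: rst_trans IH1 IH2.
Qed.

Lemma weq_refl u : weq e u u. Proof. exact: rst_refl. Qed.
Lemma weq_sym u w : weq e u w -> weq e w u. Proof. exact: rst_sym. Qed.
Lemma weq_trans u w z : weq e u w -> weq e w z -> weq e u z.
Proof. exact: rst_trans. Qed.

Lemma weq_cat2 u u' w w' : weq e u u' -> weq e w w' -> weq e (u ++ w) (u' ++ w').
Proof.
move=> H1 H2; apply: (@weq_trans _ (u' ++ w)).
  by have := @weq_cat [::] w _ _ H1.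
by have := @weq_cat u' [::] _ _ H2; rewrite !cats0.
Qed.

Lemma weq_cons a u w : weq e u w -> weq e (a :: u) (a :: w).
Proof. by move=> H; have := @weq_cat [:: a] [::] _ _ H; rewrite !cats0. Qed.

Lemma weq_cancel a s : weq e (a :: a :: s) s.
Proof. by apply: rst_step; right; exists [::], s, a. Qed.

Lemma weq_commute a r s : all (fun x => e a x) r -> weq e (a :: r ++ s) (r ++ a :: s).
Proof.
elim: r => [|x r IH] /=; first by move=> _; apply: weq_refl.
case/andP=> hx hr; apply: (@weq_trans _ (x :: a :: r ++ s)).
  by apply: rst_step; left; exists [::], (r ++ s), a, x.
by apply: weq_cons; apply: IH.
Qed.

Lemma weq_rev u : weq e (u ++ rev u) [::].
Proof.
elim: u => [|a u IH] /=; first exact: weq_refl.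
rewrite rev_cons -cats1 catA.
apply: (@weq_trans _ (a :: [::] ++ [:: a])).
  by apply: weq_cons; apply: weq_cat2 => //; apply: weq_refl.
exact: weq_cancel.
Qed.

Definition nc (a b : T) : bool := (a == b) || ~~ e a b.
Definition pile (r : seq T) : {ffun T -> seq bool} :=
  [ffun b => [seq x == b | x <- r & nc x b]].
Definition top (s : seq bool) := head false s.
Definition act (a : T) (s : {ffun T -> seq bool}) : {ffun T -> seq bool} :=
  if top (s a) then [ffun b => if nc a b then behead (s b) else s b]
  else [ffun b => if nc a b then (a == b) :: s b else s b].
Fixpoint cf (r : seq T) : bool :=
  if r is a :: r' then ~~ top (pile r' a) && cf r' else true.
Definition Act (u : seq T) := foldr act (pile [::]) u.

Lemma ncC a b : nc a b = nc b a.
Proof. by rewrite /nc eq_sym e_sym. Qed.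
Lemma nc_refl a : nc a a.
Proof. by rewrite /nc eqxx. Qed.

Lemma pile_cons a r b :
  pile (a :: r) b = if nc a b then (a == b) :: pile r b else pile r b.
Proof. by rewrite !ffunE /=; case: ifP. Qed.
Lemma pile_cat r1 r2 b : pile (r1 ++ r2) b = pile r1 b ++ pile r2 b.
Proof. by rewrite !ffunE filter_cat map_cat. Qed.
Lemma pile_nil b : pile [::] b = [::].
Proof. by rewrite ffunE. Qed.

Lemma pile_false r b : b \notin r -> pile r b = nseq (count (fun x => nc x b) r) false.
Proof.
elim: r => [|x r IH]; first by rewrite pile_nil.
rewrite inE negb_or => /andP[hx hr]; rewrite pile_cons IH //= ncC.
by case: (nc b x) => //=; rewrite eq_sym (negbTE hx).
Qed.

Lemma top_decomp r a : top (pile r a) ->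
  exists r1 r2, r = r1 ++ a :: r2 /\ all (fun x => ~~ nc x a) r1.
Proof.
elim: r => [|x r IH]; first by rewrite pile_nil.
rewrite pile_cons; case: ifP => hnc /=.
  by move/eqP=> <-; exists [::], r.
move/IH=> [r1 [r2 [-> h]]]; exists (x :: r1), r2; split => //=.
by rewrite hnc.
Qed.

Lemma pile_nnc r a : all (fun x => ~~ nc x a) r -> pile r a = [::].
Proof.
elim: r => [|x r IH]; first by rewrite pile_nil.
by case/andP=> hx hr; rewrite pile_cons (negbTE hx) IH.
Qed.

Lemma nseq_rot (A : Type) m (x : A) X : nseq m x ++ x :: X = x :: nseq m x ++ X.
Proof. by elim: m => //= m ->. Qed.

Lemma pile_split_other r1 r2 a b : all (fun x => ~~ nc x a) r1 -> b != a -> nc a b ->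
  pile (r1 ++ a :: r2) b = false :: pile (r1 ++ r2) b.
Proof.
move=> h1 hba hab.
have hb : b \notin r1.
  apply/negP=> hin; move/allP: h1 => /(_ _ hin); by rewrite ncC hab.
rewrite !pile_cat pile_cons hab (pile_false hb) eq_sym (negbTE hba).
by rewrite nseq_rot.
Qed.

Lemma pile_split_a r1 r2 a : all (fun x => ~~ nc x a) r1 ->
  pile (r1 ++ a :: r2) a = true :: pile (r1 ++ r2) a.
Proof.
by move=> h1; rewrite !pile_cat pile_cons nc_refl eqxx (pile_nnc h1).
Qed.

Lemma pile_split_nc r1 r2 a b : ~~ nc a b ->
  pile (r1 ++ a :: r2) b = pile (r1 ++ r2) b.
Proof. by move=> h; rewrite !pile_cat pile_cons (negbTE h). Qed.

Lemma cf_suffix r1 r2 : cf (r1 ++ r2) -> cf r2.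
Proof. by elim: r1 => //= x r1 IH /andP[_ /IH]. Qed.

Lemma cf_prefix r1 r2 : cf (r1 ++ r2) -> cf r1.
Proof.
elim: r1 => //= x r1 IH /andP[h /IH ->]; rewrite andbT.
move: h; rewrite pile_cat; by case: (pile r1 x).
Qed.

Lemma cf_del r1 r2 a : cf (r1 ++ a :: r2) -> all (fun x => ~~ nc x a) r1 -> cf (r1 ++ r2).
Proof.
elim: r1 => [|x r1 IH] /=; first by case/andP.
case/andP=> h hc /andP[hx hr]; rewrite IH // andbT.
by rewrite -(@pile_split_nc r1 r2 a x) // ncC.
Qed.

Definition I1 (s : {ffun T -> seq bool}) a :=
  top (s a) -> forall b, nc a b -> s b = (a == b) :: behead (s b).

Lemma I1_pile r a : I1 (pile r) a.
Proof.
move=> /top_decomp [r1 [r2 [-> h]]] b hab.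
case: (eqVneq b a) => [->|hba].
  by rewrite pile_split_a // eqxx.
by rewrite pile_split_other // eq_sym (negbTE hba).
Qed.

Lemma F2 r a : cf r -> top (pile r a) -> ~~ top (behead (pile r a)).
Proof.
move=> hc ht; move: (ht) => /top_decomp [r1 [r2 [E h]]].
rewrite E pile_split_a //= !pile_cat (pile_nnc h) /=.
move: hc; rewrite E => /cf_suffix /= /andP[] //.
Qed.

Lemma act_inv a s : I1 s a -> (top (s a) -> ~~ top (behead (s a))) ->
  act a (act a s) = s.
Proof.
move=> hI hF; rewrite {2}/act; case: ifP => ht.
- rewrite /act ffunE nc_refl (negbTE (hF ht)).
  apply/ffunP=> b; rewrite !ffunE; case hab: (nc a b) => //.
  by symmetry; apply: hI.
- rewrite /act ffunE nc_refl eqxx /=.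
  apply/ffunP=> b; rewrite !ffunE; case hab: (nc a b) => //.
Qed.

Lemma act_comm a b s : e a b -> I1 s a -> I1 s b ->
  act a (act b s) = act b (act a s).
Proof.
move=> hab hIa hIb.
have nab : ~~ nc a b by rewrite /nc negb_or hab andbT; apply/eqP=> E; move: hab; rewrite E e_irr.
have nba : ~~ nc b a by rewrite ncC.
have Ea : (act b s) a = s a by rewrite /act; case: ifP => _; rewrite ffunE (negbTE nba).
have Eb : (act a s) b = s b by rewrite /act; case: ifP => _; rewrite ffunE (negbTE nab).
rewrite [act a (act b s)]/act Ea [act b (act a s)]/act Eb.
apply/ffunP=> c.
case hta: (top (s a)); case htb: (top (s b)); rewrite !ffunE /act hta htb !ffunE;
  case hac: (nc a c); case hbc: (nc b c) => //;
  (have ca : (a == c) = false by apply/negbTE/eqP => E; move: hbc; rewrite -E ncC (negbTE nab));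
  (have cb : (b == c) = false by apply/negbTE/eqP => E; move: hac; rewrite -E (negbTE nab));
  rewrite ?ca ?cb //=.
- by have := hIa hta c hac; rewrite ca.
- by have := hIb htb c hbc; rewrite cb => <-.
Qed.


Lemma nnc_e r a : all (fun x => ~~ nc x a) r -> all (fun x => e a x) r.
Proof.
move=> /allP h; apply/allP=> x /h; rewrite /nc negb_or negbK => /andP[_].
by rewrite e_sym.
Qed.

Lemma act_pile a r : cf r ->
  (act a (pile r) = pile (a :: r) /\ cf (a :: r)) \/
  (exists r', act a (pile r) = pile r' /\ cf r' /\ weq e r' (a :: r) /\ size r' < size r).
Proof.
move=> hc; rewrite /act; case ht: (top (pile r a)).
- right; move: (ht) => /top_decomp [r1 [r2 [E h]]].
  exists (r1 ++ r2); split; last split; last split.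
  + apply/ffunP=> b; rewrite [in LHS]ffunE; case hab: (nc a b).
    * case: (eqVneq b a) => [->|hba]; first by rewrite E pile_split_a.
      by rewrite E pile_split_other.
    * by rewrite E pile_split_nc // hab.
  + by apply: (@cf_del _ _ a); rewrite -?E.
  + rewrite E; apply: weq_sym; apply: (@weq_trans _ (r1 ++ a :: a :: r2)).
      exact: weq_commute (nnc_e h).
    by have := @weq_cat r1 [::] _ _ (weq_cancel a r2); rewrite !cats0.
  + by rewrite E !size_cat /= addnS.
- left; split; last by rewrite /= ht.
  by apply/ffunP=> b; rewrite [in LHS]ffunE pile_cons.
Qed.

Lemma Act_spec u : exists r, Act u = pile r /\ cf r /\ weq e r u /\
  size r <= size u /\ (size r = size u -> r = u).
Proof.
elim: u => [|a u [r [E [hc [hw [hs hs']]]]]].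
  by exists [::]; do !split => //; exact: weq_refl.
rewrite /Act /= -/(Act u) E.
case: (act_pile a hc) => [[-> hc']|[r' [-> [hc' [hw' hs2]]]]].
- exists (a :: r); do !split => //=.
  + exact: weq_cons.
  + by move=> [/hs' ->].
- exists r'; do !split => //.
  + apply: weq_trans hw' _; exact: weq_cons.
  + by apply: leq_trans (ltnW hs2) _; apply: leq_trans hs _.
  + by move=> E'; move: hs2; rewrite E' /= ltnNge (leq_trans hs (leqnSn _)).
Qed.

Lemma Act_cf r : cf r -> Act r = pile r.
Proof.
elim: r => [|a r IH] /=; first by [].
case/andP=> ht hc; rewrite /Act /= -/(Act r) IH // /act (negbTE ht).
by apply/ffunP=> b; rewrite [in LHS]ffunE pile_cons.
Qed.

Lemma Act_cat p q : Act (p ++ q) = foldr act (Act q) p.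
Proof. by rewrite /Act foldr_cat. Qed.

Lemma Act_rstep u w : rstep e u w -> Act u = Act w.
Proof.
case=> [[p [q [x [y [exy [-> ->]]]]]] | [p [q [x [-> ->]]]]].
- rewrite !Act_cat /=; have [r [E [hc _]]] := Act_spec q.
  by rewrite E act_comm //; apply: I1_pile.
- rewrite !Act_cat /=; have [r [E [hc _]]] := Act_spec q.
  rewrite E act_inv //; first exact: I1_pile.
  exact: F2.
Qed.

Lemma Act_weq u w : weq e u w -> Act u = Act w.
Proof.
elim=> [u1 w1 H|u1|u1 w1 _ IH|u1 w1 z1 _ IH1 _ IH2] //.
- exact: Act_rstep.
- by rewrite IH1.
Qed.

Lemma size_pile r : \sum_(b : T) count id (pile r b) = size r.
Proof.
elim: r => [|a r IH].
  by apply: big1 => b _; rewrite pile_nil.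
rewrite /= -IH.
rewrite (eq_bigr (fun b => (a == b) + count id (pile r b))); last first.
  move=> b _; rewrite pile_cons; case: ifP => //= hn.
  by case: eqP hn => // <-; rewrite nc_refl.
rewrite big_split /=.
have -> : \sum_(b : T) (a == b : nat) = 1.
  rewrite (bigD1 a) //= eqxx big1 // => b /negbTE.
  by rewrite eq_sym => ->.
by rewrite add1n.
Qed.

Lemma size_pile_eq r r' : pile r = pile r' -> size r = size r'.
Proof. by move=> E; rewrite -size_pile E size_pile. Qed.

Lemma wlen_le u u' : weq e u' u -> wlen e u <= size u'.
Proof.
move=> h; rewrite /wlen; case: ex_minnP => n _ Hmin; apply: Hmin.
by apply/asboolP; exists u'.
Qed.

Lemma wlen_rep u : exists u0, size u0 = wlen e u /\ weq e u0 u.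
Proof.
rewrite /wlen; case: ex_minnP => n /asboolP [u0 [h1 h2]] _; by exists u0.
Qed.

Lemma wlen_Act u r : Act u = pile r -> wlen e u = size r.
Proof.
move=> E; apply/eqP; rewrite eqn_leq; apply/andP; split.
- have [r0 [E0 [_ [hw _]]]] := Act_spec u.
  rewrite (size_pile_eq (_ : pile r = pile r0)); first exact: wlen_le.
  by rewrite -E -E0.
- have [u0 [hs hw]] := wlen_rep u.
  have [r0 [E0 [_ [_ [hs0 _]]]]] := Act_spec u0.
  rewrite -hs (size_pile_eq (_ : pile r = pile r0)) //.
  by rewrite -E -E0; apply: Act_weq; apply: weq_sym.
Qed.

Lemma wlen_cf r : cf r -> wlen e r = size r.
Proof. by move=> h; apply: wlen_Act; apply: Act_cf. Qed.

Lemma cf_wlen u : wlen e u = size u -> cf u.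
Proof.
have [r [E [hc [_ [_ hs]]]]] := Act_spec u.
by rewrite (wlen_Act E) => /hs <-.
Qed.

Lemma weq_wlen u w : weq e u w -> wlen e u = wlen e w.
Proof.
move=> h; have [r [E _]] := Act_spec u.
by rewrite (wlen_Act E) (wlen_Act (_ : Act w = pile r)) // -(Act_weq h).
Qed.

Lemma foldr_act_stack (x : seq T) (s : {ffun T -> seq bool}) b : exists A P s0, s b = A ++ s0 /\
  (foldr act s x) b = P ++ s0 /\ size A <= size x /\ size P <= size x.
Proof.
elim: x => [|a x [A [P [s0 [E1 [E2 [h1 h2]]]]]]] /=.
  by exists [::], [::], (s b).
rewrite /act; case: ifP => _; rewrite ffunE; case: ifP => _.
- case: P E2 h2 => [|p0 P] E2 h2.
  + case: s0 E1 E2 => [|s1 s0] E1 E2.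
      by exists A, [::], [::]; rewrite E2 /= !cats0 E1 cats0; do !split => //; apply: leqW.
    exists (rcons A s1), [::], s0; rewrite E2 /= -cats1 -catA E1; do !split => //.
    by rewrite size_cat addn1.
  + exists A, P, s0; rewrite E2; do !split => //; first exact: leqW.
    by apply: leq_trans (leqnSn _) _; rewrite ltnS; move: h2 => /=; apply: leq_trans; apply: leqnSn.
- by exists A, P, s0; do !split => //; apply: leqW.
- by exists A, ((a == b) :: P), s0; rewrite E2; do !split => //; apply: leqW.
- by exists A, P, s0; do !split => //; apply: leqW.
Qed.

Lemma period_contra (O Q A P s0 pre rest : seq bool) K :
  O = pre ++ true :: nseq K false ++ rest -> K <= size pre ->
  O = A ++ s0 -> O ++ Q = P ++ s0 -> size A <= K -> size P <= K -> 0 < size Q -> False.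
Proof.
move=> EO hpre EA EQ hA hP hQ.
have hsz : size P = size A + size Q.
  have := congr1 size EQ; rewrite !size_cat EA size_cat => h; lia.
set j := size pre.
have h1 : nth false O j = true by rewrite EO nth_cat ltnn subnn.
have hsO : size O = j + (K.+1 + size rest) by rewrite EO size_cat /= size_cat size_nseq.
have h2 : nth false O (j + size Q) = false.
  rewrite EO nth_cat ltnNge leq_addr /= addKn.
  case: (size Q) hQ hsz => [//|d] _ hsz /=.
  rewrite nth_cat size_nseq (_ : d < K); last by lia.
  by rewrite nth_nseq (_ : d < K) //; lia.
have h3 : nth false (O ++ Q) (j + size Q) = false.
  by rewrite nth_cat (_ : j + size Q < size O) //; lia.
have h4 : nth false (P ++ s0) (j + size Q) = nth false s0 (j - size A).
  rewrite nth_cat ltnNge (_ : size P <= j + size Q) /=; last by lia.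
  congr nth; lia.
have h5 : nth false O j = nth false s0 (j - size A).
  by rewrite EA nth_cat ltnNge (_ : size A <= j) //; lia.
by move: h3; rewrite EQ h4 -h5 h1.
Qed.

Lemma gc_nc x y : gcompl e x y -> nc x y.
Proof. by case/andP=> _ h; rewrite /nc h orbT. Qed.
Lemma gc_sym x y : gcompl e x y = gcompl e y x.
Proof. by rewrite /gcompl eq_sym e_sym. Qed.
Lemma gc_neq x y : gcompl e x y -> x != y.
Proof. by case/andP. Qed.

Lemma walk_cf c s : path (gcompl e) c s -> cf (c :: s).
Proof.
elim: s c => [|y s IH] c; first by rewrite /= pile_nil.
rewrite [path _ _ _]/= => /andP[hcy hp].
change (~~ top (pile (y :: s) c) && cf (y :: s)).
rewrite (IH y hp) andbT pile_cons.
have -> : nc y c by rewrite ncC gc_nc.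
by rewrite eq_sym (negbTE (gc_neq hcy)).
Qed.

Lemma walk_top c s x : path (gcompl e) c s -> top (pile (c :: s) x) -> x = c.
Proof.
elim: s c => [|y s IH] c.
  by rewrite pile_cons pile_nil; case: ifP => //= _ _ /eqP ->.
rewrite [path _ _ _]/= => /andP[hcy hp]; rewrite pile_cons; case: ifP => hnc.
  by rewrite /= => /eqP ->.
move/(IH _ hp) => Ex; move: hnc; by rewrite Ex gc_nc.
Qed.

Fixpoint expo (r : seq T) (c : T) : bool :=
  if r is x :: r' then ((x == c) && ~~ has (fun y => nc y c) r') || expo r' c else false.

Lemma expo_mem r c : expo r c -> c \in r.
Proof.
elim: r => //= x r IH /orP [/andP[/eqP -> _]|/IH h]; by rewrite inE ?eqxx // h orbT.
Qed.

Lemma expo_clique r c c' : expo r c -> expo r c' -> c != c' -> e c c'.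
Proof.
elim: r => //= x r IH /orP[/andP[/eqP Ec hc]|hc] /orP[/andP[/eqP Ec' hc']|hc'] hne.
- by move: hne; rewrite -Ec -Ec' eqxx.
- have hin : c' \in r by apply: expo_mem.
  have : ~~ nc c' c by apply: contra hc => h; apply/hasP; exists c'.
  by rewrite /nc negb_or negbK e_sym => /andP[_].
- have hin : c \in r by apply: expo_mem.
  have : ~~ nc c c' by apply: contra hc' => h; apply/hasP; exists c.
  by rewrite /nc negb_or negbK => /andP[_].
- by apply: IH.
Qed.

Lemma size_pile_count r b : size (pile r b) = count (fun y => nc y b) r.
Proof. by rewrite ffunE size_map size_filter. Qed.

Lemma cf_cat_walk w0 c s : cf w0 -> path (gcompl e) c s -> ~~ expo w0 c ->
  cf (w0 ++ c :: s).
Proof.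
elim: w0 => [|x w0 IH]; first by move=> _ h _; apply: walk_cf.
rewrite [cf (x :: w0)]/= [expo _ _]/= => /andP[ht hc] hp; rewrite negb_or => /andP[hx he].
rewrite cat_cons [cf _]/= IH // andbT pile_cat.
case E: (pile w0 x) => [|b0 l]; last by move: ht; rewrite E.
apply/negP => /= /(walk_top hp) Ex.
move: hx; rewrite -Ex eqxx /= negbK has_count -size_pile_count E.
by [].
Qed.

Hypothesis hV : 3 <= #|T|.
Hypothesis hconn : forall x y : T, connect (gcompl e) x y.

Lemma other (x : T) : exists y, y != x.
Proof.
have : 0 < #|predC1 x| by rewrite cardC1; lia.
by case/card_gt0P => y; rewrite inE => hy; exists y.
Qed.

Lemma compl_nb (x : T) : exists y, gcompl e x y.
Proof.
have [y hy] := other x.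
move: (hconn x y) => /connectP [p hp Ey].
case: p hp Ey => [|z p] /=; first by move=> _ Ey; move: hy; rewrite Ey eqxx.
by case/andP=> h _ _; exists z.
Qed.

Definition good b := [exists z, [exists z', gcompl e b z && gcompl e z z' && (z' != b)]].

Lemma stay a z : (forall y, gcompl e a y -> y = z) -> (forall y, gcompl e z y -> y = a) ->
  forall v p, (v == a) || (v == z) -> path (gcompl e) v p -> all (fun u => (u == a) || (u == z)) p.
Proof.
move=> ha hz v p; elim: p v => [|y p IH] v //= hv /andP[hvy hp].
have hy : (y == a) || (y == z).
  case/orP: hv => /eqP Ev; rewrite Ev in hvy.
    by rewrite (ha _ hvy) eqxx orbT.
  by rewrite (hz _ hvy) eqxx.
by rewrite hy (IH y hy hp).
Qed.

Lemma good_nb a : exists b, good b && nc a b.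
Proof.
case ga: (good a); first by exists a; rewrite ga nc_refl.
have [z hz] := compl_nb a.
have hng : forall z1 z', gcompl e a z1 -> gcompl e z1 z' -> z' = a.
  move=> z1 z' h1 h2; move/negbT: ga; rewrite negb_exists => /forallP /(_ z1).
  rewrite negb_exists => /forallP /(_ z') ; rewrite h1 h2 /= negbK => /eqP //.
case: (pickP (fun z2 => gcompl e a z2 && (z2 != z))) => [z2 /andP[h2 hne]|hnone].
  exists z; rewrite gc_nc // andbT; apply/existsP; exists a; apply/existsP; exists z2.
  by rewrite gc_sym hz h2 hne.
exfalso.
have ha : forall y, gcompl e a y -> y = z.
  by move=> y hy; move: (hnone y); rewrite hy /= => /negbT; rewrite negbK => /eqP.
have hz' : forall y, gcompl e z y -> y = a by move=> y; apply: hng.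
case: (pickP [pred y | y \notin [:: a; z]]) => [y|hnone2]; last first.
  have : #|T| <= #|[:: a; z]|.
    apply: subset_leq_card; apply/subsetP => y _; move: (hnone2 y) => /= /negbFE //.
  have := card_size [:: a; z]; move: hV; rewrite /=; lia.
rewrite /= !inE negb_or => /andP[hya hyz].
move: (hconn a y) => /connectP [p hp Ey].
have := @stay _ _ ha hz' a p (introT orP (or_introl (eqxx a))) hp.
have := mem_last a p; rewrite -Ey inE (negbTE hya) /= => hin /allP /(_ _ hin).
by rewrite (negbTE hya) (negbTE hyz).
Qed.

Definition stackpat (K : nat) (s : seq T) b :=
  exists X Y, pile s b = X ++ true :: nseq K false ++ Y /\ K <= size X.

Lemma stackpat_catl K l s b : stackpat K s b -> stackpat K (l ++ s) b.
Proof.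
move=> [X [Y [E h]]]; exists (pile l b ++ X), Y; rewrite pile_cat E catA size_cat.
by split => //; apply: leq_trans h (leq_addl _ _).
Qed.

Lemma stackpat_catr K s r b : stackpat K s b -> stackpat K (s ++ r) b.
Proof.
move=> [X [Y [E h]]]; exists X, (Y ++ pile r b); rewrite pile_cat E.
by rewrite -catA /= -catA.
Qed.

Section Block.
Variables (K : nat) (b z z' : T).
Hypotheses (h1 : gcompl e b z) (h2 : gcompl e z z') (h3 : z' != b).
Definition rest0 := flatten (nseq K [:: z; z']) ++ [:: z].
Definition blk := rest0 ++ b :: rest0.

Lemma path_rest0 d : gcompl e d z -> path (gcompl e) d rest0.
Proof.
rewrite /rest0; elim: K d => [|k IH] d hd /=; first by rewrite hd.
by rewrite hd h2 /=; apply: IH; rewrite gc_sym.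
Qed.

Lemma last_rest0 d : last d rest0 = z.
Proof. by rewrite /rest0 cats1 last_rcons. Qed.

Lemma path_blk : path (gcompl e) b blk.
Proof.
rewrite /blk cat_path path_rest0 // last_rest0 /= gc_sym h1 /=.
exact: path_rest0.
Qed.

Lemma last_blk d : last d blk = z.
Proof. by rewrite /blk last_cat /= last_rest0. Qed.

Lemma pile_rest0 : exists m, pile rest0 b = nseq m false /\ K <= m.
Proof.
have hall : forall k, all (fun u => (u == z) || (u == z')) (flatten (nseq k [:: z; z'])).
  by elim=> //= k ->; rewrite !eqxx orbT.
have hcnt : forall k, k <= count (fun y => nc y b) (flatten (nseq k [:: z; z'])).
  elim=> //= k IH; rewrite (_ : nc z b) //=; first by rewrite add1n ltnS; apply: leq_trans IH (leq_addl _ _).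
  by rewrite ncC gc_nc.
have hb : b \notin rest0.
  rewrite /rest0 mem_cat negb_or; apply/andP; split; last by rewrite inE (gc_neq h1).
  apply/negP=> /(allP (hall K)).
  by rewrite (negbTE (gc_neq h1)) eq_sym (negbTE h3).
exists (count (fun y => nc y b) rest0); split; first exact: pile_false.
by rewrite /rest0 count_cat; apply: leq_trans (hcnt K) (leq_addr _ _).
Qed.

Lemma stackpat_blk : stackpat K blk b.
Proof.
have [m [Em hm]] := pile_rest0.
exists (nseq m false), (nseq (m - K) false); rewrite size_nseq; split => //.
by rewrite /blk pile_cat pile_cons nc_refl eqxx Em -nseqD subnKC.
Qed.
End Block.

Lemma builder K (l : seq T) cur : exists s, path (gcompl e) cur s /\
  forall b, b \in l -> good b -> stackpat K s b.
Proof.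
elim: l cur => [|b l IH] cur; first by exists [::].
case gb: (good b).
- move: (gb) => /existsP [z /existsP [z' /andP[/andP[h1 h2] h3]]].
  have [q hq Eq] := connectP (hconn cur b).
  have [s1 [hs1 Hs1]] := IH z.
  exists (q ++ blk K b z z' ++ s1); split.
    by rewrite cat_path hq -Eq (cat_path _ b (blk K b z z')) path_blk // last_blk hs1.
  move=> b'; rewrite inE => /orP[/eqP -> _|hin gb'].
    by apply: stackpat_catl; apply: stackpat_catr; apply: stackpat_blk.
  by rewrite catA; apply: stackpat_catl; apply: Hs1.
- have [s1 [hs1 Hs1]] := IH cur; exists s1; split => // b'.
  by rewrite inE => /orP[/eqP ->|]; [rewrite gb | exact: Hs1].
Qed.

Lemma visit (l : seq T) cur : exists s, path (gcompl e) cur s /\ {subset l <= cur :: s}.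
Proof.
elim: l cur => [|b l IH] cur; first by exists [::].
have [q hq Eq] := connectP (hconn cur b).
have [s1 [hs1 Hs1]] := IH b.
exists (q ++ s1); split; first by rewrite cat_path hq -Eq hs1.
have hbin : b \in cur :: q ++ s1.
  by rewrite Eq; have := mem_last cur q; rewrite !inE mem_cat => /orP[->|->]; rewrite ?orbT.
move=> y; rewrite inE => /orP[/eqP -> //|/Hs1].
rewrite inE => /orP[/eqP -> //| h].
by rewrite mem_cat h !orbT.
Qed.

Lemma cover_cycle x : exists ts, cycle (gcompl e) (x :: ts) /\ forall y, y \in x :: ts.
Proof.
have [s [hs Hs]] := visit (enum T) x.
have [y hy] := compl_nb x.
have [q hq Eq] := connectP (hconn (last x s) y).
exists (s ++ q); split.
  by rewrite /= rcons_cat cat_path hs rcons_path hq -Eq gc_sym hy.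
move=> y0; have := Hs y0; rewrite mem_enum => /(_ isT).
by rewrite !inE mem_cat => /orP[->|->]; rewrite ?orbT.
Qed.

Lemma path_wpow d y1 ts L : gcompl e d y1 -> path (gcompl e) y1 (rcons ts y1) ->
  path (gcompl e) d (wpow (y1 :: ts) L).
Proof.
rewrite /wpow; elim: L d => [|L IH] d hd hc //=.
rewrite hd cat_path; have := hc; rewrite rcons_path => /andP[h1 h2]; rewrite h1 /=.
by apply: IH.
Qed.

Lemma sumn_size (S : seq (seq T)) x : x \in S -> size x <= sumn (map size S).
Proof.
elim: S => //= y S IH; rewrite inE => /orP[/eqP ->|/IH h]; first exact: leq_addr.
exact: leq_trans h (leq_addl _ _).
Qed.

Lemma weq_conj g x : weq e x (g ++ (rev g ++ x ++ g) ++ rev g).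
Proof.
have -> : g ++ (rev g ++ x ++ g) ++ rev g = (g ++ rev g) ++ x ++ (g ++ rev g) by rewrite !catA.
apply: weq_sym; have := weq_cat2 (weq_rev g) (weq_cat2 (weq_refl x) (weq_rev g)).
by rewrite cats0.
Qed.

Lemma main (w : seq T) (S : seq (seq T)) :
  exists (v : seq T) (t : seq T),
    cycle (gcompl e) t /\ (forall x : T, x \in t) /\
    forall (L : nat), 1 <= L ->
      wlen e (w ++ v ++ wpow t L) = wlen e w + wlen e v + wlen e (wpow t L)
      /\ (forall x : seq T, x \in S -> ~ weq e x [::] ->
            ~ wle e (w ++ v ++ wpow t L) (x ++ w ++ v ++ wpow t L)).
Proof.
have [w0 [Ew0 [cfw0 [hw0 _]]]] := Act_spec w.
set K := sumn (map size S).
have [c hc] : exists c, ~~ expo w0 c.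
  have : 0 < #|T| by lia.
  case/card_gt0P => x0 _.
  have [y0 hy0] := compl_nb x0.
  case E1: (expo w0 x0); last by exists x0; rewrite E1.
  case E2: (expo w0 y0); last by exists y0; rewrite E2.
  have hne := gc_neq hy0; move: hy0; by rewrite /gcompl (expo_clique E1 E2 hne) andbF.
have [s [hs Hs]] := builder K (enum T) c.
have [y1 hy1] := compl_nb (last c s).
have [ts [hts Hts]] := cover_cycle y1.
exists (c :: s), (y1 :: ts); split => //; split => // L _.
set P := wpow (y1 :: ts) L.
have hB : path (gcompl e) c (s ++ P) by rewrite cat_path hs; apply: path_wpow.
have cfG : cf (w0 ++ (c :: s) ++ P) by apply: cf_cat_walk.
have cfv : cf (c :: s) by apply: (@cf_prefix _ P); apply: (@cf_suffix w0).
have cfP : cf P by apply: (@cf_suffix (c :: s)); apply: (@cf_suffix w0).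
have wGg : weq e (w0 ++ (c :: s) ++ P) (w ++ (c :: s) ++ P).
  by apply: weq_cat2 => //; apply: weq_refl.
have wG : wlen e (w ++ (c :: s) ++ P) = size (w0 ++ (c :: s) ++ P).
  by rewrite -(weq_wlen wGg) wlen_cf.
split.
  by rewrite wG (wlen_Act Ew0) (wlen_cf cfv) (wlen_cf cfP) !size_cat addnA.
move=> x xS hx Hle; rewrite /wle in Hle.
set g := w ++ (c :: s) ++ P in wG wGg Hle *.
set G := w0 ++ (c :: s) ++ P in cfG wG wGg *.
have [H0 [hsH hwH]] := wlen_rep (winv g ++ x ++ g).
have cfH : cf H0 by apply: cf_wlen; rewrite (weq_wlen hwH) hsH.
have wGH : weq e (G ++ H0) (x ++ g).
  apply: (@weq_trans _ (g ++ winv g ++ x ++ g)); first exact: weq_cat2.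
  rewrite /winv catA; have := weq_cat2 (weq_rev g) (weq_refl (x ++ g)); by [].
have cfGH : cf (G ++ H0).
  apply: cf_wlen; rewrite (weq_wlen wGH) -Hle size_cat hsH -wG addnC.
  by rewrite (weq_wlen (weq_sym wGg)) wlen_cf // ; rewrite -(weq_wlen wGg) wG.
have Estack : foldr act (pile G) x = pile (G ++ H0).
  rewrite -(Act_cf cfGH) (Act_weq wGH) Act_cat -(Act_weq wGg) Act_cf //.
case EH: H0 => [|a H'].
  apply: hx; rewrite EH in hwH.
  have h1 : weq e (g ++ (winv g ++ x ++ g) ++ rev g) (g ++ [::] ++ rev g).
    by apply: weq_cat; apply: weq_sym.
  have h2 : weq e x (g ++ (winv g ++ x ++ g) ++ rev g) by apply: weq_conj.
  apply: weq_trans h2 (weq_trans h1 _); exact: weq_rev.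
have [b /andP[gb nab]] := good_nb a.
have [X [Y [EX hX]]] : stackpat K (c :: s) b.
  by apply: (@stackpat_catl _ [:: c]); apply: Hs => //; rewrite mem_enum.
have [A [P' [s0 [EA [EP [hA hP]]]]]] := foldr_act_stack x (pile G) b.
have hxK : size x <= K by apply: sumn_size.
apply: (@period_contra (pile G b) (pile H0 b) A P' s0 (pile w0 b ++ X) (Y ++ pile P b) K).
- by rewrite /G !pile_cat EX -!catA /= -!catA.
- by rewrite size_cat; apply: leq_trans hX (leq_addl _ _).
- exact: EA.
- by rewrite -pile_cat -Estack.
- exact: leq_trans hA hxK.
- exact: leq_trans hP hxK.
- by rewrite EH pile_cons nab.
Qed.

End RACG.

Theorem proposition2p5 (T : finType) (e : rel T)
    (e_sym : symmetric e) (e_irr : irreflexive e)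
    (hV : 3 <= #|T|)
    (hconn : forall x y : T, connect (gcompl e) x y)
    (w : seq T) (S : seq (seq T)) :
  exists (v : seq T) (t : seq T),
    cycle (gcompl e) t /\ (forall x : T, x \in t) /\
    forall (L : nat), 1 <= L ->
      wlen e (w ++ v ++ wpow t L) = wlen e w + wlen e v + wlen e (wpow t L)
      /\ (forall x : seq T, x \in S -> ~ weq e x [::] ->
            ~ wle e (w ++ v ++ wpow t L) (x ++ w ++ v ++ wpow t L)).
Proof. exact: (main e_sym e_irr hV hconn). Qed.
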